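(* Let $\mathcal{A},\mathcal{B}\in\operatorname{Sym}(k,\mathbb{R})$ with $\mathcal{A}$ positive definite, let $\xi\in\mathbb{R}^k$, and put $f(x)={}^tx\mathcal{A}x-1$, $g(x)={}^tx\mathcal{B}x+\xi\cdot x-1$. Suppose that for all $x\in\mathbb{R}^k$, $f(x)\le0$ implies $g(x)\le0$. Then $\operatorname{tr}\mathcal{A}\ge\operatorname{tr}\mathcal{B}$; moreover, either $f=g$ or $\operatorname{tr}\mathcal{A}>\operatorname{tr}\mathcal{B}$. *)

(* Defs.v *)
From mathcomp Require Import all_boot all_order all_algebra.
From mathcomp Require Import reals.
Set Implicit Arguments. Unset Strict Implicit. Unset Printing Implicit Defensive.
Import Order.TTheory GRing.Theory Num.Theory.
Local Open Scope ring_scope.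

Definition qform {R : ringType} {k : nat} (M : 'M[R]_k) (x : 'rV[R]_k) : R :=
  (x *m M *m x^T) 0 0.

Definition dotv {R : ringType} {k : nat} (xi x : 'rV[R]_k) : R :=
  (xi *m x^T) 0 0.

Definition symmetric_mx {R : ringType} {k : nat} (M : 'M[R]_k) : Prop :=
  M^T = M.

Definition posdef_mx {R : numDomainType} {k : nat} (M : 'M[R]_k) : Prop :=
  symmetric_mx M /\ forall x : 'rV[R]_k, x != 0 -> 0 < qform M x.

(* Main.v *)
Require Import Defs.
From mathcomp Require Import all_boot all_order all_algebra.
From mathcomp Require Import reals ring lra.
From Stdlib Require Import FunctionalExtensionality.
Import Order.TTheory GRing.Theory Num.Theory.
Local Open Scope ring_scope.

Definition bil {R : comRingType} {k : nat} (M : 'M[R]_k) (u v : 'rV[R]_k) : R :=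
  (u *m M *m v^T) 0 0.

Section H.
Variables (R : comRingType) (k : nat).
Implicit Types (M : 'M[R]_k) (u v : 'rV[R]_k).

Lemma qformD M u v : qform M (u + v) = qform M u + qform M v + bil M u v + bil M v u.
Proof.
rewrite /qform /bil linearD /= !mulmxDl !mulmxDr !mxE; ring.
Qed.

Lemma bilZl M c u v : bil M (c *: u) v = c * bil M u v.
Proof. by rewrite /bil -scalemxAl -scalemxAl mxE. Qed.

Lemma bilZr M c u v : bil M u (c *: v) = c * bil M u v.
Proof. by rewrite /bil linearZ /= -scalemxAr mxE. Qed.

Lemma qformZ M c u : qform M (c *: u) = c ^+ 2 * qform M u.
Proof. rewrite -[qform _ _]/(bil _ _ _) bilZl bilZr; rewrite /bil/qform; ring. Qed.

Lemma dotvZ (xi : 'rV[R]_k) c u : dotv xi (c *: u) = c * dotv xi u.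
Proof. by rewrite /dotv linearZ /= -scalemxAr mxE. Qed.

Lemma qform0 M : qform M 0 = 0.
Proof. by rewrite /qform !mul0mx mxE. Qed.

Lemma dotv0 (xi : 'rV[R]_k) : dotv xi 0 = 0.
Proof. by rewrite /dotv trmx0 mulmx0 mxE. Qed.

Lemma bil_delta M i j : bil M (delta_mx 0 i) (delta_mx 0 j) = M i j.
Proof.
by rewrite /bil -rowE trmx_delta -colE !mxE.
Qed.

Lemma bilB M N u v : bil (M - N) u v = bil M u v - bil N u v.
Proof. by rewrite /bil mulmxBr mulmxBl !mxE. Qed.

End H.

Theorem lemma2p3 (R : realType) (k : nat) (A B : 'M[R]_k) (xi : 'rV[R]_k) :
  symmetric_mx A -> symmetric_mx B -> posdef_mx A ->
  (forall x : 'rV[R]_k, qform A x - 1 <= 0 -> qform B x + dotv xi x - 1 <= 0) ->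
  \tr B <= \tr A /\
  ((fun x : 'rV[R]_k => qform A x - 1) = (fun x => qform B x + dotv xi x - 1)
   \/ \tr B < \tr A).
Proof.
move=> sA sB [_ pA] hyp.
have key : forall x, qform B x + Num.sqrt (qform A x) * `|dotv xi x| <= qform A x.
  move=> x; have [->|x0] := eqVneq x 0.
    by rewrite !qform0 dotv0 normr0 mulr0 !addr0.
  have q0 := pA x x0; set q := qform A x in q0 *.
  set s := Num.sqrt q.
  have s0 : 0 < s by rewrite sqrtr_gt0.
  have s2 : s ^+ 2 = q by rewrite sqr_sqrtr // ltW.
  have sn : s != 0 by rewrite gt_eqF.
  have gen : forall c, c ^+ 2 * q = 1 ->
      qform B x * (c * s) ^+ 2 + dotv xi x * c * s ^+ 2 <= q.
    move=> c hc; have := hyp (c *: x).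
    rewrite qformZ -/q hc subrr lexx => /(_ isT).
    rewrite qformZ dotvZ => h.
    have E : qform B x * (c * s) ^+ 2 + dotv xi x * c * s ^+ 2 - q =
       s ^+ 2 * (c ^+ 2 * qform B x + c * dotv xi x - 1).
      rewrite -s2; ring.
    rewrite -subr_le0 E; apply: mulr_ge0_le0 => //; exact: sqr_ge0.
  have c1 : (s^-1) ^+ 2 * q = 1 by rewrite -s2 -exprMn mulVf // expr1n.
  have c2 : (- s^-1) ^+ 2 * q = 1 by rewrite sqrrN.
  have e1 : s^-1 * s = 1 by rewrite mulVf.
  have h2 : qform B x + dotv xi x * s <= q.
    have := gen _ c1.
    suff -> : qform B x * (s^-1 * s) ^+ 2 + dotv xi x * s^-1 * s ^+ 2 =
      qform B x + dotv xi x * s by [].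
    by field.
  have h1 : qform B x - dotv xi x * s <= q.
    have := gen _ c2.
    suff -> : qform B x * (- s^-1 * s) ^+ 2 + dotv xi x * - s^-1 * s ^+ 2 =
      qform B x - dotv xi x * s by [].
    by field.
  case: (lerP 0 (dotv xi x)) => hd.
    rewrite ger0_norm //; lra.
  rewrite ltr0_norm //; lra.
have qle : forall x, qform B x <= qform A x.
  move=> x; apply: le_trans (key x); rewrite lerDl mulr_ge0 //.
  exact: sqrtr_ge0.
have diag : forall M : 'M[R]_k, forall i, qform M (delta_mx 0 i) = M i i.
  by move=> M i; rewrite -[qform _ _]/(bil _ _ _) bil_delta.
have trle : \tr B <= \tr A.
  by rewrite /mxtrace; apply: ler_sum => i _; rewrite -!diag.
split => //.
case: (ltrP (\tr B) (\tr A)) => htr; [by right|left].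
have eqtr : \tr A - \tr B = 0 by apply/eqP; rewrite subr_eq0 eq_le htr trle.
have dz : forall i, A i i - B i i = 0.
  move=> i; move: eqtr; rewrite /mxtrace -sumrB => h.
  apply: (psumr_eq0P _ h) => // j _; rewrite subr_ge0 -!diag; exact: qle.
have AB : A = B.
  apply/matrixP => i j; apply/eqP; rewrite -subr_eq0; apply/eqP.
  set c := A i j - B i j.
  have cs : A j i - B j i = c.
    by rewrite /c -{1}sA -{1}sB !mxE.
  have := qle (delta_mx 0 i + (- c) *: delta_mx 0 j).
  rewrite -subr_ge0.
  have qB : forall x, qform A x - qform B x = qform (A - B) x.
    by move=> x; rewrite -![qform _ x]/(bil _ _ _) bilB.
  rewrite qB qformD qformZ bilZr bilZl -![qform _ _]/(bil _ _ _) !bil_delta !mxE.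
  rewrite !dz cs => h.
  rewrite -/c in h.
  have : c ^+ 2 <= 0 by rewrite expr2; nra.
  by rewrite le_eqVlt ltNge sqr_ge0 orbF sqrf_eq0 => /eqP.
subst B.
apply: functional_extensionality => x.
suff -> : dotv xi x = 0 by rewrite addr0.
have [->|x0] := eqVneq x 0; first by rewrite dotv0.
move: (key x); rewrite -{3}[qform A x]addr0 lerD2l pmulr_rle0; last first.
  by rewrite sqrtr_gt0; exact: pA.
by rewrite normr_le0 => /eqP.
Qed.
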